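(* Let $f_1,\dots,f_N$, $\Phi$ and the iterates $x_k$, directions $d_k$ be as defined in the context (Algorithm X). If $d_k\ne 0$, then $\Phi'(x_k;d_k)<0$.
   Context: Standing assumptions: $f_1,\dots,f_N:\mathbb{R}^n\to\mathbb{R}$; (H1) there is $M\in\mathbb{R}$ with $f_j(x)\ge M$ for all $x$ and $j$; (H2) each $f_j\in C^1(\mathbb{R}^n)$ and there is a modulus of continuity $w$ (increasing $w:[0,\infty)\to[0,\infty)$, $w(0)=0$, continuous at $0$) with $\|\nabla f_j(x)-\nabla f_j(y)\|\le w(\|x-y\|)$ for all $x,y$ and $j$. Let $\Phi(x)=\max_{1\le j\le N}f_j(x)$, and $g'(x;d)=\lim_{t\to0^+}\frac{g(x+td)-g(x)}{t}$ denotes the directional derivative. Algorithm X: set $x_0=0$, $c=\sigma=\tfrac12$. At iteration $k$: let $G\in\mathbb{R}^{N\times n}$ have $j$-th row $\nabla f_j(x_k)^T$, $f=(f_1(x_k),\dots,f_N(x_k))^T$; let $\lambda$ be a solution of $\min_\lambda(\tfrac12\lambda^TGG^T\lambda-f^T\lambda)$ subject to $\sum_i\lambda_i=1$, $\lambda_i\ge0$; set $p_k=-G^T\lambda$, and $d_k=0$ if $p_k=0$, otherwise $d_k=p_k/\|p_k\|$. If $d_k=0$ set $\alpha_k=1$; otherwise $\alpha_k=\sigma^j$ where $j$ is the smallest nonnegative integer with $\Phi(x_k+\sigma^jd_k)<\Phi(x_k)+c\sigma^j\Phi'(x_k;d_k)$. Set $x_{k+1}=x_k+\alpha_kd_k$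 and repeat. *)

(* Defs.v *)
From HB Require Import structures.
From mathcomp Require Import all_boot all_order all_algebra.
From mathcomp Require Import all_classical all_reals all_analysis.
Set Implicit Arguments. Unset Strict Implicit. Unset Printing Implicit Defensive.
Import Order.TTheory GRing.Theory Num.Theory.
Import numFieldNormedType.Exports.
Local Open Scope classical_set_scope.
Local Open Scope ring_scope.

(* Points of R^n are column vectors 'cV[R]_n.  The N functions of the paper
   are indexed by 'I_N.+1 (i.e. N.+1 >= 1 functions), so that Phi = max is
   well defined. *)

Section Defs.
Variable R : realType.

Definition edot (n : nat) (u v : 'cV[R]_n) : R := \sum_(i < n) u i 0 * v i 0.
Definition enorm (n : nat) (u : 'cV[R]_n) : R := Num.sqrt (edot u u).

Definition grad (n : nat) (f : 'cV[R]_n -> R) (x : 'cV[R]_n) : 'cV[R]_n :=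
  \col_(i < n) ('d f x (delta_mx i 0 : 'cV[R]_n)).

Definition Phi (N n : nat) (f : 'I_N.+1 -> 'cV[R]_n -> R) (x : 'cV[R]_n) : R :=
  \big[Num.max/f ord0 x]_(j < N.+1) f j x.

Definition dquot (n : nat) (g : 'cV[R]_n -> R) (x d : 'cV[R]_n) : R -> R :=
  fun t => (g (x + t *: d) - g x) / t.
Definition dirder (n : nat) (g : 'cV[R]_n -> R) (x d : 'cV[R]_n) : R :=
  lim (dquot g x d t @[t --> 0^'+]).

Definition H1 (N n : nat) (f : 'I_N.+1 -> 'cV[R]_n -> R) : Prop :=
  exists M : R, forall j x, M <= f j x.

Definition is_modulus (w : R -> R) : Prop :=
  [/\ (forall a b, 0 <= a -> a <= b -> w a <= w b),
      w 0 = 0,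
      (forall a, 0 <= a -> 0 <= w a) &
      w t @[t --> 0^'+] --> 0].

Definition H2 (N n : nat) (f : 'I_N.+1 -> 'cV[R]_n -> R) : Prop :=
  (forall j x, differentiable (f j) x) /\
  (forall j, continuous (grad (f j))) /\
  exists w : R -> R, is_modulus w /\
    forall j x y, enorm (grad (f j) x - grad (f j) y) <= w (enorm (x - y)).

Definition Gmat (N n : nat) (f : 'I_N.+1 -> 'cV[R]_n -> R) (x : 'cV[R]_n)
  : 'M[R]_(N.+1, n) := \matrix_(j, i) (grad (f j) x i 0).
Definition fvec (N n : nat) (f : 'I_N.+1 -> 'cV[R]_n -> R) (x : 'cV[R]_n)
  : 'cV[R]_N.+1 := \col_j f j x.

Definition qp_obj (N n : nat) (G : 'M[R]_(N.+1, n)) (fv lam : 'cV[R]_N.+1) : R :=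
  2^-1 * (lam^T *m G *m G^T *m lam) 0 0 - (fv^T *m lam) 0 0.

Definition in_simplex (N : nat) (lam : 'cV[R]_N) : Prop :=
  \sum_(i < N) lam i 0 = 1 /\ forall i, 0 <= lam i 0.

Definition qp_sol (N n : nat) (f : 'I_N.+1 -> 'cV[R]_n -> R) (x : 'cV[R]_n)
  (lam : 'cV[R]_N.+1) : Prop :=
  in_simplex lam /\
  forall mu, in_simplex mu ->
    qp_obj (Gmat f x) (fvec f x) lam <= qp_obj (Gmat f x) (fvec f x) mu.

Definition pdir (N n : nat) (f : 'I_N.+1 -> 'cV[R]_n -> R) (x : 'cV[R]_n)
  (lam : 'cV[R]_N.+1) : 'cV[R]_n := - ((Gmat f x)^T *m lam).

Definition ddir (n : nat) (p : 'cV[R]_n) : 'cV[R]_n :=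
  if p == 0 then 0 else (enorm p)^-1 *: p.

Definition cX : R := 2^-1.
Definition sigmaX : R := 2^-1.

Definition armijo_step (N n : nat) (f : 'I_N.+1 -> 'cV[R]_n -> R)
  (x d : 'cV[R]_n) (alpha : R) : Prop :=
  if d == 0 then alpha = 1 else
  let P (j : nat) := Phi f (x + sigmaX ^+ j *: d) <
                     Phi f x + cX * sigmaX ^+ j * dirder (Phi f) x d in
  exists j : nat, [/\ P j, (forall i, (i < j)%N -> ~ P i) & alpha = sigmaX ^+ j].

Definition runX (N n : nat) (f : 'I_N.+1 -> 'cV[R]_n -> R)
  (x : nat -> 'cV[R]_n) (lam : nat -> 'cV[R]_N.+1) (K : nat) : Prop :=
  [/\ x 0%N = 0,
      (forall k, (k <= K)%N -> qp_sol f (x k) (lam k)) &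
      (forall k, (k < K)%N -> exists alpha,
          armijo_step f (x k) (ddir (pdir f (x k) (lam k))) alpha /\
          x k.+1 = x k + alpha *: ddir (pdir f (x k) (lam k)))].

End Defs.

(* Main.v *)
Require Import Defs.
From HB Require Import structures.
From mathcomp Require Import all_boot all_order all_algebra.
From mathcomp Require Import all_classical all_reals all_analysis.
From mathcomp Require Import lra.
Import Order.TTheory GRing.Theory Num.Theory.
Import numFieldNormedType.Exports.
Local Open Scope classical_set_scope.
Local Open Scope ring_scope.

Set Implicit Arguments. Unset Strict Implicit.
Section S.
Variable R : realType.

Lemma dquot_cvg (n : nat) (g : 'cV[R]_n -> R) x d :
  differentiable g x -> dquot g x d t @[t --> 0^'+] --> 'd g x d.
Proof.
move=> hg; have hd := diff_derivable (v:=d) hg.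
rewrite -deriveE //.
apply: cvg_dnbhs_at_right.
have -> : dquot g x d = (fun h : R => h^-1 *: ((g \o shift x) (h *: d) - g x)).
  apply/funext => h; by rewrite /dquot /= [h *: d + x]addrC mulrC.
exact: hd. Qed.

Lemma diff_edot (n : nat) (g : 'cV[R]_n -> R) x d :
  'd g x d = edot (grad g x) d.
Proof.
rewrite {1}(matrix_sum_delta d) linear_sum /edot.
apply: eq_bigr => i _; rewrite big_ord1 linearZ /= mxE mulrC.
by [].
Qed.

Lemma edotC n (u v : 'cV[R]_n) : edot u v = edot v u.
Proof. by apply: eq_bigr => i _; rewrite mulrC. Qed.
Lemma edotDl n (u v w : 'cV[R]_n) : edot (u + v) w = edot u w + edot v w.
Proof. by rewrite /edot -big_split; apply: eq_bigr => i _; rewrite mxE mulrDl. Qed.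
Lemma edotNl n (u w : 'cV[R]_n) : edot (- u) w = - edot u w.
Proof. by rewrite /edot -sumrN; apply: eq_bigr => i _; rewrite mxE mulNr. Qed.
Lemma edotBl n (u v w : 'cV[R]_n) : edot (u - v) w = edot u w - edot v w.
Proof. by rewrite edotDl edotNl. Qed.
Lemma edotZl n a (u w : 'cV[R]_n) : edot (a *: u) w = a * edot u w.
Proof. by rewrite /edot mulr_sumr; apply: eq_bigr => i _; rewrite mxE mulrA. Qed.
Lemma edotDr n (u v w : 'cV[R]_n) : edot w (u + v) = edot w u + edot w v.
Proof. by rewrite !(edotC w) edotDl. Qed.
Lemma edotBr n (u v w : 'cV[R]_n) : edot w (u - v) = edot w u - edot w v.
Proof. by rewrite !(edotC w) edotBl. Qed.
Lemma edotNr n (u w : 'cV[R]_n) : edot w (- u) = - edot w u.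
Proof. by rewrite !(edotC w) edotNl. Qed.
Lemma edotZr n a (u w : 'cV[R]_n) : edot w (a *: u) = a * edot w u.
Proof. by rewrite !(edotC w) edotZl. Qed.
Lemma edot_ge0 n (u : 'cV[R]_n) : 0 <= edot u u.
Proof. by apply: sumr_ge0 => i _; rewrite -expr2 sqr_ge0. Qed.
Lemma edot_gt0 n (u : 'cV[R]_n) : u != 0 -> 0 < edot u u.
Proof.
move=> hu; rewrite lt_def edot_ge0 andbT; apply: contra hu => /eqP h.
have := h; rewrite /edot => /eqP; rewrite psumr_eq0; last by move=> i _; rewrite -expr2 sqr_ge0.
move=> /allP hall; apply/eqP/matrixP => i j; rewrite ord1 mxE.
have /hall := mem_index_enum i; rewrite /= mulf_eq0 orbb => /eqP ->; by [].
Qed.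
Lemma edotE n (u v : 'cV[R]_n) : (u^T *m v) 0 0 = edot u v.
Proof. by rewrite mxE; apply: eq_bigr => i _; rewrite mxE. Qed.

Lemma qp_objE N n (G : 'M[R]_(N.+1, n)) fv lam :
  qp_obj G fv lam = 2^-1 * edot (G^T *m lam) (G^T *m lam) - edot fv lam.
Proof.
have h : lam^T *m G = (G^T *m lam)^T by rewrite trmx_mul trmxK.
by rewrite /qp_obj h -mulmxA !edotE.
Qed.

Lemma qp_vi N n (f : 'I_N.+1 -> 'cV[R]_n -> R) x lam mu :
  qp_sol f x lam -> in_simplex mu ->
  0 <= edot ((Gmat f x)^T *m lam) ((Gmat f x)^T *m mu - (Gmat f x)^T *m lam)
       - edot (fvec f x) (mu - lam).
Proof.
move=> [[hl1 hl0] hmin] [hm1 hm0].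
set G := Gmat f x; set fv := fvec f x; set v := G^T *m lam; set w := G^T *m mu.
set a := edot v (w - v) - edot fv (mu - lam).
rewrite leNgt; apply/negP => ha.
set Q := edot (w - v) (w - v).
have hQ : 0 <= Q by apply: edot_ge0.
have hQa : 0 < Q - a by lra.
set s := - a / (Q - a).
have hs : s * (Q - a) = - a by rewrite /s mulfVK // gt_eqF.
have s0 : 0 < s by rewrite /s divr_gt0 // oppr_gt0.
have s1 : s <= 1 by rewrite /s ler_pdivrMr // mul1r; lra.
set mu' := lam + s *: (mu - lam).
have hmu' : in_simplex mu'.
  split.
    rewrite /mu'; under eq_bigr do rewrite !mxE.
    by rewrite big_split /= -mulr_sumr sumrB hl1 hm1 subrr mulr0 addr0.
  move=> i; rewrite !mxE; have := hl0 i; have := hm0 i; nra.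
have := hmin _ hmu'; rewrite !qp_objE -/G -/fv -/v.
have -> : G^T *m mu' = v + s *: (w - v) by rewrite /mu' mulmxDr -scalemxAr mulmxBr.
have ea : a = edot v w - edot v v - (edot fv mu - edot fv lam).
  by rewrite /a !(edotBl, edotBr).
have eQ : Q = edot w w - 2 * edot v w + edot v v.
  by rewrite /Q !(edotBl, edotBr) (edotC w v); lra.
rewrite /mu' !(edotDl, edotDr, edotZl, edotZr) !(edotNl, edotNr) (edotC w v).
rewrite ea in hs ha; rewrite eQ in hs; nra.
Qed.

Lemma Phi_ge N n (f : 'I_N.+1 -> 'cV[R]_n -> R) x j : f j x <= Phi f x.
Proof. by rewrite /Phi (bigD1 j) //= le_max lexx. Qed.

Lemma Phi_ex N n (f : 'I_N.+1 -> 'cV[R]_n -> R) x : exists j, Phi f x = f j x.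
Proof.
rewrite /Phi; apply: (big_ind (fun v => exists j, v = f j x)).
- by exists ord0.
- move=> a b [i ->] [k ->]; case: (leP (f i x) (f k x)) => h.
    by exists k.
  by exists i.
- by move=> i _; exists i.
Qed.

Lemma simplex_delta N (j : 'I_N) : in_simplex (delta_mx j 0 : 'cV[R]_N).
Proof.
split; last by move=> i; rewrite mxE ler0n.
rewrite (bigD1 j) //= big1 ?addr0; first by rewrite mxE !eqxx.
by move=> i hi; rewrite mxE (negbTE hi).
Qed.

Lemma edot_delta N (u : 'cV[R]_N) j : edot u (delta_mx j 0) = u j 0.
Proof.
rewrite /edot (bigD1 j) //= big1 ?addr0; first by rewrite mxE !eqxx mulr1.
by move=> i hi; rewrite mxE (negbTE hi) mulr0.
Qed.

Lemma Gt_delta N n (f : 'I_N.+1 -> 'cV[R]_n -> R) x j :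
  (Gmat f x)^T *m delta_mx j 0 = grad (f j) x.
Proof. by rewrite -colE; apply/matrixP => i k; rewrite ord1 !mxE. Qed.

Lemma fv_lam N n (f : 'I_N.+1 -> 'cV[R]_n -> R) x lam :
  in_simplex lam -> edot (fvec f x) lam <= Phi f x.
Proof.
move=> [h1 h0]; apply: (@le_trans _ _ (\sum_i Phi f x * lam i 0)).
  by apply: ler_sum => i _; rewrite mxE ler_wpM2r // Phi_ge.
by rewrite -mulr_sumr h1 mulr1.
Qed.

Lemma active_neg N n (f : 'I_N.+1 -> 'cV[R]_n -> R) x lam j :
  qp_sol f x lam -> f j x = Phi f x ->
  edot (grad (f j) x) (pdir f x lam) <= - edot (pdir f x lam) (pdir f x lam).
Proof.
move=> hq hj; have := qp_vi hq (simplex_delta j).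
have := fv_lam f x hq.1.
rewrite Gt_delta /pdir edotBr edot_delta !(edotBr, edotNl, edotNr) opprK mxE (edotC (grad _ _)).
rewrite hj; lra.
Qed.

Lemma dquotE (n : nat) (g : 'cV[R]_n -> R) x d t : t != 0 ->
  g (x + t *: d) = g x + t * dquot g x d t.
Proof. by move=> ht; rewrite /dquot mulrC divfK //; lra. Qed.

Lemma near_upper (n : nat) (g : 'cV[R]_n -> R) x d (P0 L e : R) :
  differentiable g x -> 0 < e ->
  (g x = P0 /\ 'd g x d <= L) \/ g x < P0 ->
  \forall t \near 0^'+, g (x + t *: d) < P0 + t * (L + e).
Proof.
move=> hg he [[h1 h2]|h].
  have := dquot_cvg (d:=d) hg; move=> /cvgrPdist_lt /(_ e he) hn.
  near=> t.
  have ht : 0 < t by near: t; exact: nbhs_right_gt.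
  have hq : `|'d g x d - dquot g x d t| < e by near: t; exact: hn.
  rewrite dquotE ?gt_eqF // h1 ltrD2l ltr_pM2l //.
  move: hq; rewrite ltr_distlC => /andP[_ hq]; lra.
have hc : (fun t => t * (dquot g x d t - (L + e))) @ 0^'+ --> 0 * ('d g x d - (L + e)).
  apply: cvgM; first exact: cvg_at_right_filter cvg_id.
  by apply: cvgB; [exact: dquot_cvg|exact: cvg_cst].
rewrite mul0r in hc.
have hP : 0 < P0 - g x by lra.
move: hc => /cvgrPdist_lt /(_ _ hP) hn.
near=> t.
have ht : 0 < t by near: t; exact: nbhs_right_gt.
have hq : `|0 - t * (dquot g x d t - (L + e))| < P0 - g x by near: t; exact: hn.
rewrite dquotE ?gt_eqF //.
move: hq; rewrite sub0r normrN => /ltr_normlP [_ hq]; lra.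
Unshelve. all: by end_near.
Qed.
End S.
Unset Implicit Arguments. Set Strict Implicit.

Theorem theorem3 (R : realType) (N n : nat) (f : 'I_N.+1 -> 'cV[R]_n -> R)
  (hH1 : H1 f) (hH2 : H2 f)
  (x : nat -> 'cV[R]_n) (lam : nat -> 'cV[R]_N.+1) (K : nat)
  (hrun : runX f x lam K) :
  let d := ddir (pdir f (x K) (lam K)) in
  d != 0 ->
  exists l : R, dquot (Phi f) (x K) d t @[t --> 0^'+] --> l /\ l < 0.
Proof.
move=> d hd.
case: hrun => _ hqK _; have hq := hqK K (leqnn K).
case: hH2 => hdiff _.
set xK := x K; set p := pdir f xK (lam K).
have hp : p != 0.
  by apply: contra hd => /eqP hp0; rewrite /d /ddir -/xK -/p hp0 eqxx.
have hdE : d = (enorm p)^-1 *: p by rewrite /d /ddir -/xK -/p (negbTE hp).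
have hnp : 0 < enorm p by rewrite /enorm sqrtr_gt0 edot_gt0.
set l := fun j => 'd (f j) xK d.
have hneg : forall j, f j xK = Phi f xK -> l j < 0.
  move=> j hj; rewrite /l diff_edot hdE edotZr.
  have := active_neg hq hj; have := edot_gt0 hp => h1 h2.
  rewrite pmulr_rlt0 ?invr_gt0 //; rewrite -/p in h2; lra.
have [j0 hj0] := Phi_ex f xK.
set L := \big[Num.max/l j0]_(j | f j xK == Phi f xK) l j.
have hLge : forall j, f j xK = Phi f xK -> l j <= L.
  by move=> j hj; rewrite /L (bigD1 j) /= ?hj ?eqxx // le_max lexx.
have [js [hjs hLs]] : exists j, f j xK = Phi f xK /\ L = l j.
  rewrite /L; apply: (big_ind (fun v => exists j, f j xK = Phi f xK /\ v = l j)).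
  - by exists j0.
  - move=> a b [i [hi ->]] [k [hk ->]]; case: (leP (l i) (l k)) => _.
      by exists k.
    by exists i.
  - by move=> i /eqP hi; exists i.
exists L; split; last by rewrite hLs hneg.
apply/cvgrPdist_lt => e he.
have hall : \forall t \near 0^'+, forall j, f j (xK + t *: d) < Phi f xK + t * (L + e).
  apply: filter_forall => j; apply: near_upper => //.
  have := Phi_ge f xK j; rewrite le_eqVlt => /orP [/eqP hj|hj].
    by left; split => //; exact: hLge.
  by right.
have := dquot_cvg (d:=d) (hdiff js xK); move/cvgrPdist_lt => /(_ e he) hjsn.
near=> t.
have ht : 0 < t by near: t; exact: nbhs_right_gt.
have hq3 : `|l js - dquot (f js) xK d t| < e by near: t; exact: hjsn.
have hu : forall j, f j (xK + t *: d) < Phi f xK + t * (L + e) by near: t; exact: hall.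
have [jt hjt] := Phi_ex f (xK + t *: d).
have h1 := hu jt; have h2 := Phi_ge f (xK + t *: d) js.
have eP : Phi f (xK + t *: d) = Phi f xK + t * dquot (Phi f) xK d t.
  by apply: dquotE; rewrite gt_eqF.
have ej : f js (xK + t *: d) = f js xK + t * dquot (f js) xK d t.
  by apply: dquotE; rewrite gt_eqF.
have a1 : t * dquot (f js) xK d t <= t * dquot (Phi f) xK d t by lra.
have a2 : t * dquot (Phi f) xK d t < t * (L + e) by lra.
rewrite ler_pM2l // in a1; rewrite ltr_pM2l // in a2.
rewrite ltr_distlC; move: hq3; rewrite ltr_distlC -hLs => /andP[hq1 hq2].
apply/andP; split; lra.
Unshelve. all: by end_near.
Qed.
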